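(* Let $\mathscr T\colon\mathbb{IDA}\to\mathbb{IM}$ send each involutive generalized dynamic algebra $\mathfrak K$ to the involutive submonoid $\mathscr T(K)$ of $(K,\odot,{}^*,e)$ generated by $\widetilde K$ (the smallest subset containing $\widetilde K$ and $e$ and closed under $\odot$ and ${}^*$), and each morphism $f$ to its restriction. Then: (1) for every IDA $\mathfrak K$, $\widetilde K\subseteq\mathscr T(K)\subseteq K$ and $\mathscr T(\mathfrak K)$ is an involutive submonoid of $(K,\odot,{}^*,e)$; (2) if $\mathfrak K$ is a semi-Foulis dynamic algebra such that for all $s,t\in\mathscr T(K)$, $s=t$ iff $s\equiv t$, then $\nu_{\mathfrak K}\colon\mathscr T(\mathfrak K)\to\mathscr T(\mathbf{Lin}(\widetilde{\mathfrak K}))$, $\nu_{\mathfrak K}(k)=k\bullet(-)$, is a well-defined isomorphism of involutive monoids, and its restriction to $\widetilde K$ is an order-preserving bijection from $(\widetilde K,\preceq)$ onto the test set $\{\pi_u\mid u\in\widetilde K\}$ of $\mathbf{Lin}(\widetilde{\mathfrak K})$ ordered by $p\le q\iff p=q\circ p$; (3) for every complete orthomodular lattice $\mathcal M$, $\mu_{\mathcal M}\colon\mathscr T(\mathbf{Lin}(\mathcal M))\to\mathscr T(\mathscr P(\mathscr T(\mathbf{Lin}(\mathcal M))))$, $\mu_{\mathcal M}(f)=\{f\}$, is an isomorphism in $\mathbb{IM}$; (4) for every morphism $f\colon\mathfrak K_1\to\mathfrak K_2$ in $\mathbb{IDA}$, $f(\mathscr T(K_1))\subseteq\mathscr T(K_2)$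 and $\mathscr T(f)=f|_{\mathscr T(K_1)}$.
   Context: An involutive unital quantale is $(Q,\bigsqcup,\odot,{}^*,e)$: complete join-semilattice $Q$, associative $\odot$ distributing over arbitrary joins in each argument, unit $e$, ${}^*$ with $x^{**}=x$, $(x\odot y)^*=y^*\odot x^*$, $(\bigsqcup x_i)^*=\bigsqcup x_i^*$. An involutive generalized dynamic algebra (IDA) is such a quantale with ${\sim}\colon K\to K$ satisfying, for all $x,y$ and families $(x_i)$: ${\sim}(x\odot{\sim}{\sim}y)={\sim}(x\odot y)$; ${\sim}(\bigsqcup{\sim}{\sim}x_i)={\sim}(\bigsqcup x_i)$; $({\sim}x)^*={\sim}x$; ${\sim}{\sim}({\sim}{\sim}x\odot y)={\sim}({\sim}x\sqcup{\sim}({\sim}x\sqcup y))$. Test set $\widetilde K=\{{\sim}k\mid k\in K\}$; $\bigvee W={\sim}{\sim}\bigsqcup W$ for $W\subseteq\widetilde K$; $w^\perp={\sim}w$; $k\preceq l$ iff $\bigvee\{k,l\}=l$; $k\bullet v={\sim}{\sim}(k\odot v)$ for $k\in K,v\in\widetilde K$; $k\equiv l$ iff $k\bullet w=l\bullet w$ for all $w\in\widetilde K$. IDA morphisms preserve arbitrary joins, $\odot$, ${}^*$, unit, ${\sim}$ (category $\mathbb{IDA}$); $\mathfrak K$ is semi-Foulis if $(\widetilde K,\preceq,{}^\perp)$ is a complete orthomodular lattice. $\mathbb{IM}$ is the category of involutive monoids $(M,\cdot,e,{}^* )$ with homomorphisms preserving product, unit, involution. For a complete orthomodular lattice $\mathcal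 M$: Sasaki projection $\pi_m(x)=m\wedge(m^\perp\vee x)$; a map $f$ is linear if there is $f^*$ with $f(x)\le y^\perp\iff x\le f^*(y)^\perp$ for all $x,y$; $\mathbf{Lin}(\mathcal M)$ (linear maps with pointwise joins, composition, ${}^*$, unit $\mathrm{id}$) is an IDA with ${\sim}f=\pi_{f(1)^\perp}$; its test set is $\{\pi_m\mid m\in M\}$ and $\pi_m^*=\pi_m$. For an involutive submonoid $L$ of $\mathbf{Lin}(\mathcal M)$ containing all $\pi_m$, $\mathscr P(L)$ is the IDA of all subsets of $L$ with union, $A\odot B=\{a\circ b\}$, $A^*=\{a^*\}$, unit $\{\mathrm{id}_M\}$, ${\sim}A=\{\pi_{(\bigvee_{a\in A}a(1))^\perp}\}$. *)

(* Defs.v *)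
From Stdlib Require Import ClassicalEpsilon.

Definition image {A B : Type} (f : A -> B) (S : A -> Prop) : B -> Prop :=
  fun b => exists a, S a /\ b = f a.
Definition pair_set {A : Type} (a b : A) : A -> Prop := fun z => z = a \/ z = b.

Definition partial_order {A : Type} (le : A -> A -> Prop) : Prop :=
  (forall x, le x x) /\ (forall x y, le x y -> le y x -> x = y) /\
  (forall x y z, le x y -> le y z -> le x z).

Definition is_lub {A : Type} (le : A -> A -> Prop) (S : A -> Prop) (s : A) : Prop :=
  (forall x, S x -> le x s) /\ (forall u, (forall x, S x -> le x u) -> le s u).

Inductive gen {A : Type} (mul : A -> A -> A) (star : A -> A) (e : A)
    (G : A -> Prop) : A -> Prop :=
  | gen_base x : G x -> gen mul star e G x
  | gen_unit : gen mul star e G e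
  | gen_mul x y : gen mul star e G x -> gen mul star e G y -> gen mul star e G (mul x y)
  | gen_star x : gen mul star e G x -> gen mul star e G (star x).

Definition IM_hom {A B : Type} (mulA : A -> A -> A) (starA : A -> A) (eA : A)
    (SA : A -> Prop) (mulB : B -> B -> B) (starB : B -> B) (eB : B)
    (SB : B -> Prop) (phi : A -> B) : Prop :=
  (forall x, SA x -> SB (phi x)) /\
  (forall x y, SA x -> SA y -> phi (mulA x y) = mulB (phi x) (phi y)) /\
  phi eA = eB /\
  (forall x, SA x -> phi (starA x) = starB (phi x)).

Definition IM_iso {A B : Type} (mulA : A -> A -> A) (starA : A -> A) (eA : A)
    (SA : A -> Prop) (mulB : B -> B -> B) (starB : B -> B) (eB : B)
    (SB : B -> Prop) (phi : A -> B) : Prop :=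
  IM_hom mulA starA eA SA mulB starB eB SB phi /\
  (forall x y, SA x -> SA y -> phi x = phi y -> x = y) /\
  (forall y, SB y -> exists x, SA x /\ phi x = y).

Record IDA := {
  ida_car :> Type;
  ida_le : ida_car -> ida_car -> Prop;
  ida_join : (ida_car -> Prop) -> ida_car;
  ida_mul : ida_car -> ida_car -> ida_car;
  ida_star : ida_car -> ida_car;
  ida_e : ida_car;
  ida_sim : ida_car -> ida_car;
  ida_le_po : partial_order ida_le;
  ida_join_lub : forall S, is_lub ida_le S (ida_join S);
  ida_mulA : forall x y z, ida_mul x (ida_mul y z) = ida_mul (ida_mul x y) z;
  ida_mul1l : forall x, ida_mul ida_e x = x;
  ida_mul1r : forall x, ida_mul x ida_e = x;
  ida_mul_joinl : forall x S, ida_mul x (ida_join S) = ida_join (image (ida_mul x) S);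
  ida_mul_joinr : forall S y,
      ida_mul (ida_join S) y = ida_join (image (fun s => ida_mul s y) S);
  ida_starK : forall x, ida_star (ida_star x) = x;
  ida_star_mul : forall x y, ida_star (ida_mul x y) = ida_mul (ida_star y) (ida_star x);
  ida_star_join : forall S, ida_star (ida_join S) = ida_join (image ida_star S);
  ida_sim_mul : forall x y,
      ida_sim (ida_mul x (ida_sim (ida_sim y))) = ida_sim (ida_mul x y);
  ida_sim_join : forall S,
      ida_sim (ida_join (image (fun x => ida_sim (ida_sim x)) S)) = ida_sim (ida_join S);
  ida_star_sim : forall x, ida_star (ida_sim x) = ida_sim x;
  ida_sim_dyn : forall x y,
      ida_sim (ida_sim (ida_mul (ida_sim (ida_sim x)) y)) =
      ida_sim (ida_join (pair_set (ida_sim x)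
                 (ida_sim (ida_join (pair_set (ida_sim x) y)))))
}.

Set Implicit Arguments.
Unset Strict Implicit.

Section IDAdefs.
Variable K : IDA.
Definition tests (k : K) : Prop := exists l, k = ida_sim K l.
Definition bigvee (W : K -> Prop) : K := ida_sim K (ida_sim K (ida_join K W)).
Definition prec (k l : K) : Prop := bigvee (pair_set k l) = l.
Definition bullet (k v : K) : K := ida_sim K (ida_sim K (ida_mul K k v)).
Definition equivK (k l : K) : Prop := forall w, tests w -> bullet k w = bullet l w.
Definition T : K -> Prop := gen (ida_mul K) (ida_star K) (ida_e K) tests.
End IDAdefs.
Arguments T : clear implicits.

Definition is_IDA_mor (K1 K2 : IDA) (f : K1 -> K2) : Prop :=
  (forall S, f (ida_join K1 S) = ida_join K2 (image f S)) /\
  (forall x y, f (ida_mul K1 x y) = ida_mul K2 (f x) (f y)) /\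
  (forall x, f (ida_star K1 x) = ida_star K2 (f x)) /\
  f (ida_e K1) = ida_e K2 /\
  (forall x, f (ida_sim K1 x) = ida_sim K2 (f x)).

Section OML.
Variables (M : Type) (le : M -> M -> Prop) (compl : M -> M) (sup : (M -> Prop) -> M).

Definition top : M := sup (fun _ => True).
Definition bot : M := sup (fun _ => False).
Definition joinb (a b : M) : M := sup (pair_set a b).
Definition meetb (a b : M) : M := sup (fun z => le z a /\ le z b).

Definition is_cOML : Prop :=
  partial_order le /\
  (forall S, is_lub le S (sup S)) /\
  (forall x, compl (compl x) = x) /\
  (forall x y, le x y -> le (compl y) (compl x)) /\
  (forall x, joinb x (compl x) = top) /\
  (forall x, meetb x (compl x) = bot) /\
  (forall x y, le x y -> y = joinb x (meetb y (compl x))).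

Definition sasaki (m : M) : M -> M := fun x => meetb m (joinb (compl m) x).

Definition is_adjoint (f g : M -> M) : Prop :=
  forall x y, le (f x) (compl y) <-> le x (compl (g y)).
Definition linear (f : M -> M) : Prop := exists g, is_adjoint f g.
(* the adjoint f^* (unique for linear f) *)
Definition adj (f : M -> M) : M -> M :=
  epsilon (inhabits (fun x : M => x)) (fun g => is_adjoint f g).

Definition comp (f g : M -> M) : M -> M := fun x => f (g x).

Definition Lin_tests (f : M -> M) : Prop := exists m, f = sasaki m.
Definition T_Lin : (M -> M) -> Prop := gen comp adj (fun x : M => x) Lin_tests.
Definition Lin_le (p q : M -> M) : Prop := p = comp q p.

Definition P_mul (A B : (M -> M) -> Prop) : (M -> M) -> Prop :=
  fun h => exists a b, A a /\ B b /\ h = comp a b.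
Definition P_star (A : (M -> M) -> Prop) : (M -> M) -> Prop := image adj A.
Definition P_unit : (M -> M) -> Prop := fun h => h = (fun x : M => x).
Definition P_sim (A : (M -> M) -> Prop) : (M -> M) -> Prop :=
  fun h => h = sasaki (compl (sup (fun z => exists a, A a /\ z = a top))).
Definition P_tests (L : (M -> M) -> Prop) (X : (M -> M) -> Prop) : Prop :=
  exists A, (forall a, A a -> L a) /\ X = P_sim A.
Definition T_P (L : (M -> M) -> Prop) : ((M -> M) -> Prop) -> Prop :=
  gen P_mul P_star P_unit (P_tests L).
End OML.

Definition TK (K : IDA) : Type := {w : K | tests w}.
Definition sim_tests (K : IDA) (k : K) : tests (ida_sim K k) := ex_intro _ k eq_refl.
Definition TK_le (K : IDA) (a b : TK K) : Prop := prec (proj1_sig a) (proj1_sig b).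
Definition TK_compl (K : IDA) (a : TK K) : TK K :=
  exist _ (ida_sim K (proj1_sig a)) (sim_tests (proj1_sig a)).
Definition nu (K : IDA) (k : K) : TK K -> TK K :=
  fun v => exist _ (bullet k (proj1_sig v))
             (sim_tests (ida_sim K (ida_mul K k (proj1_sig v)))).

(* Main.v *)
Require Import Defs.
From Stdlib Require Import ClassicalEpsilon FunctionalExtensionality PropExtensionality ProofIrrelevance.
Set Implicit Arguments.
Unset Strict Implicit.

Lemma pred_ext {A : Type} (P Q : A -> Prop) : (forall x, P x <-> Q x) -> P = Q.
Proof. intros H; apply functional_extensionality; intro x; apply propositional_extensionality; auto. Qed.

Section Lat.
Variables (M : Type) (le : M -> M -> Prop) (sup : (M -> Prop) -> M).
Hypothesis Hpo : partial_order le.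
Hypothesis Hlub : forall S, is_lub le S (sup S).
Set Default Proof Using "Hpo Hlub".

Lemma le_refl x : le x x. Proof. apply Hpo. Qed.
Lemma le_anti x y : le x y -> le y x -> x = y. Proof. apply Hpo. Qed.
Lemma le_trans x y z : le x y -> le y z -> le x z. Proof. apply Hpo. Qed.
Lemma sup_ub S x : S x -> le x (sup S). Proof. apply (Hlub S). Qed.
Lemma sup_least S u : (forall x, S x -> le x u) -> le (sup S) u. Proof. apply (Hlub S). Qed.

Lemma jl a b : le a (joinb sup a b). Proof. apply sup_ub; left; auto. Qed.
Lemma jr a b : le b (joinb sup a b). Proof. apply sup_ub; right; auto. Qed.
Lemma jlst a b u : le a u -> le b u -> le (joinb sup a b) u.
Proof. intros; apply sup_least; intros x [->| ->]; auto. Qed.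
Lemma jchar a b j : le a j -> le b j -> (forall u, le a u -> le b u -> le j u) -> joinb sup a b = j.
Proof. intros; apply le_anti; [apply jlst; auto| apply H1; [apply jl|apply jr]]. Qed.
Lemma jmono a b c d : le a c -> le b d -> le (joinb sup a b) (joinb sup c d).
Proof. intros; apply jlst; [eapply le_trans; [eauto|apply jl]|eapply le_trans; [eauto|apply jr]]. Qed.
Lemma jC a b : joinb sup a b = joinb sup b a.
Proof. apply le_anti; apply jlst; auto using jl, jr. Qed.
Lemma jid a : joinb sup a a = a.
Proof. apply jchar; auto using le_refl. Qed.
Lemma j_absorb a b : joinb sup a (joinb sup a b) = joinb sup a b.
Proof. apply jchar; auto using le_refl, jl. Qed.
Lemma j_absorb2 a b : joinb sup b (joinb sup a b) = joinb sup a b.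
Proof. apply jchar; auto using le_refl, jr. Qed.
Lemma j_distr a b u : joinb sup (joinb sup a b) u = joinb sup (joinb sup a u) (joinb sup b u).
Proof.
  apply le_anti.
  - apply jlst. apply jlst.
    + eapply le_trans; [apply jl|apply jl].
    + eapply le_trans; [apply jl|apply jr].
    + eapply le_trans; [apply jr|apply jl].
  - apply jlst; apply jlst; auto using jr.
    + eapply le_trans; [apply jl|apply jl].
    + eapply le_trans; [apply jr|apply jl].
Qed.
Lemma sup_single c : sup (fun z => z = c) = c.
Proof. apply le_anti. apply sup_least; intros x ->; apply le_refl. apply sup_ub; auto. Qed.
Lemma le_top x : le x (top sup). Proof. apply sup_ub; exact I. Qed.
Lemma ml a b : le (meetb le sup a b) a. Proof. apply sup_least; intros x [H _]; auto. Qed.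
Lemma mr a b : le (meetb le sup a b) b. Proof. apply sup_least; intros x [_ H]; auto. Qed.
Lemma mgst a b z : le z a -> le z b -> le z (meetb le sup a b).
Proof. intros; apply sup_ub; auto. Qed.
Lemma mmono a b c d : le a c -> le b d -> le (meetb le sup a b) (meetb le sup c d).
Proof. intros; apply mgst; [eapply le_trans; [apply ml|eauto]|eapply le_trans; [apply mr|eauto]]. Qed.
Lemma mC a b : meetb le sup a b = meetb le sup b a.
Proof. apply le_anti; apply mgst; auto using ml, mr. Qed.
Lemma m_top a : meetb le sup a (top sup) = a.
Proof. apply le_anti. apply ml. apply mgst; auto using le_refl, le_top. Qed.
Lemma j_top a : joinb sup a (top sup) = top sup.
Proof. apply le_anti. apply le_top. apply jr. Qed.
Unset Default Proof Using.
End Lat.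

Section OMLth.
Variables (M : Type) (le : M -> M -> Prop) (compl : M -> M) (sup : (M -> Prop) -> M).
Hypothesis H : is_cOML le compl sup.
Let Hpo : partial_order le := proj1 H.
Let Hlub : forall S, is_lub le S (sup S) := proj1 (proj2 H).
Let cc : forall x, compl (compl x) = x := proj1 (proj2 (proj2 H)).
Let canti : forall x y, le x y -> le (compl y) (compl x) := proj1 (proj2 (proj2 (proj2 H))).
Let OM : forall x y, le x y -> y = joinb sup x (meetb le sup y (compl x)) :=
  proj2 (proj2 (proj2 (proj2 (proj2 (proj2 H))))).

Lemma le_compl a b : le a (compl b) -> le b (compl a).
Proof. intros h; apply canti in h; rewrite cc in h; exact h. Qed.
Lemma le_compl2 a b : le (compl a) b -> le (compl b) a.
Proof. intros h; apply canti in h; rewrite cc in h; exact h. Qed.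

Lemma meet_dm a b : meetb le sup a b = compl (joinb sup (compl a) (compl b)).
Proof.
  apply (le_anti Hpo Hlub).
  - apply le_compl. apply (jlst Hpo Hlub); apply canti; [apply (ml Hpo Hlub)|apply (mr Hpo Hlub)].
  - apply (mgst Hpo Hlub).
    + apply le_compl2; apply (jl Hpo Hlub).
    + apply le_compl2; apply (jr Hpo Hlub).
Qed.
Lemma compl_meet a b : compl (meetb le sup a b) = joinb sup (compl a) (compl b).
Proof. rewrite meet_dm, cc; reflexivity. Qed.

Lemma dualOM c a : le c a -> meetb le sup a (joinb sup (compl a) c) = c.
Proof.
  intros h. apply canti in h. apply OM in h. rewrite cc in h.
  rewrite <- (cc c) at 2. rewrite h.
  rewrite (meet_dm (compl c) a), !cc.
  rewrite (jC Hpo Hlub (compl a)), (mC Hpo Hlub a).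
  rewrite (meet_dm (joinb sup c (compl a)) a), (jC Hpo Hlub (compl (joinb sup c (compl a)))). reflexivity.
Qed.

Lemma sas_j a x : joinb sup (compl a) (sasaki le compl sup a x) = joinb sup (compl a) x.
Proof.
  unfold sasaki. assert (h : le (compl a) (joinb sup (compl a) x)) by apply (jl Hpo Hlub).
  apply OM in h. rewrite cc in h. rewrite (mC Hpo Hlub a). symmetry; exact h.
Qed.

Lemma sas_galois a x b :
  le (sasaki le compl sup a x) b <-> le x (joinb sup (compl a) (meetb le sup a b)).
Proof.
  split; intros h.
  - eapply (le_trans Hpo Hlub). apply (jr Hpo Hlub (compl a) x). rewrite <- sas_j.
    apply (jmono Hpo Hlub). apply (le_refl Hpo Hlub). apply (mgst Hpo Hlub); auto. apply (ml Hpo Hlub).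
  - unfold sasaki. apply (le_trans Hpo Hlub (y := meetb le sup a (joinb sup (compl a) (meetb le sup a b)))).
    + apply (mmono Hpo Hlub). apply (le_refl Hpo Hlub). apply (jlst Hpo Hlub). apply (jl Hpo Hlub). exact h.
    + rewrite dualOM. apply (mr Hpo Hlub). apply (ml Hpo Hlub).
Qed.

Lemma sas_selfadj a : is_adjoint le compl (sasaki le compl sup a) (sasaki le compl sup a).
Proof.
  intros x y. rewrite sas_galois. unfold sasaki.
  rewrite compl_meet, (meet_dm a (compl y)), cc. tauto.
Qed.

Lemma sas_fix a x : le x a -> sasaki le compl sup a x = x.
Proof. intros; unfold sasaki; apply dualOM; auto. Qed.

Lemma sas_le a x : le (sasaki le compl sup a x) a.
Proof. apply (ml Hpo Hlub). Qed.

Lemma adj_sym f g : is_adjoint le compl f g -> is_adjoint le compl g f.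
Proof.
  intros h x y. split; intros h1.
  - apply le_compl. apply h. apply le_compl. exact h1.
  - apply le_compl. apply h. apply le_compl. exact h1.
Qed.

Lemma adj_comp f g f' g' : is_adjoint le compl f g -> is_adjoint le compl f' g' ->
  is_adjoint le compl (comp f f') (comp g' g).
Proof. intros h h' x y. unfold comp. rewrite (h (f' x) y), (h' x (g y)). tauto. Qed.

Lemma adj_id : is_adjoint le compl (fun x => x) (fun x => x).
Proof. intros x y; tauto. Qed.

Lemma adj_unique f g : is_adjoint le compl f g -> adj le compl f = g.
Proof.
  intros h. unfold adj.
  assert (ex : exists g, is_adjoint le compl f g) by eauto.
  pose proof (epsilon_spec (inhabits (fun x : M => x)) _ ex) as h2.
  set (g2 := epsilon _ _) in *. clearbody g2.
  apply functional_extensionality; intro y.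
  rewrite <- (cc (g2 y)), <- (cc (g y)). f_equal.
  apply (le_anti Hpo Hlub).
  - apply h. apply h2. apply (le_refl Hpo Hlub).
  - apply h2. apply h. apply (le_refl Hpo Hlub).
Qed.
End OMLth.

Section IDAth.
Variable K : IDA.
Notation sm := (ida_sim K).
Notation jn := (joinb (ida_join K)).
Let Hpo := ida_le_po K.
Let Hlub := ida_join_lub K.

Lemma sim3 x : sm (sm (sm x)) = sm x.
Proof. pose proof (ida_sim_mul K (ida_e K) x) as h. rewrite !ida_mul1l in h. exact h. Qed.
Lemma test2 a : tests a -> sm (sm a) = a.
Proof. intros [l ->]. apply sim3. Qed.
Lemma sim_jn a b : sm (jn (sm (sm a)) (sm (sm b))) = sm (jn a b).
Proof.
  unfold joinb. rewrite <- (ida_sim_join K (pair_set a b)). f_equal. f_equal.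
  apply pred_ext; intro z; unfold image, pair_set; split.
  - intros [-> | ->]; eauto.
  - intros [w [[-> | ->] ->]]; auto.
Qed.
Lemma TK_eq (a b : TK K) : proj1_sig a = proj1_sig b -> a = b.
Proof. destruct a, b; simpl; intros ->; f_equal; apply proof_irrelevance. Qed.

Lemma nu_mul x y : comp (nu x) (nu y) = nu (ida_mul K x y).
Proof.
  apply functional_extensionality; intro v; apply TK_eq; simpl. unfold bullet.
  rewrite ida_sim_mul, ida_mulA. reflexivity.
Qed.
Lemma nu_e : nu (ida_e K) = (fun v => v).
Proof.
  apply functional_extensionality; intro v; apply TK_eq; simpl. unfold bullet.
  rewrite ida_mul1l. apply test2. apply (proj2_sig v).
Qed.
Lemma e_star : ida_star K (ida_e K) = ida_e K.
Proof.
  transitivity (ida_mul K (ida_star K (ida_e K)) (ida_star K (ida_star K (ida_e K)))).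
  - rewrite ida_starK, ida_mul1r. reflexivity.
  - rewrite <- ida_star_mul, ida_mul1r, ida_starK. reflexivity.
Qed.

Variable sup : (TK K -> Prop) -> TK K.
Hypothesis HO : is_cOML (@TK_le K) (@TK_compl K) sup.

Lemma TK_join (a b : TK K) :
  joinb sup a b = exist _ (sm (sm (jn (proj1_sig a) (proj1_sig b)))) (sim_tests _).
Proof.
  pose proof (proj1 HO) as Po. pose proof (proj1 (proj2 HO)) as Lb.
  destruct a as [a Ha], b as [b Hb].
  apply (jchar Po Lb); unfold TK_le, prec, bigvee; simpl.
  - assert (E: sm (jn a (sm (sm (jn a b)))) = sm (jn a b)).
    { rewrite <- (test2 Ha) at 1. rewrite sim_jn, (j_absorb Hpo Hlub). reflexivity. }
    change (sm (sm (jn a (sm (sm (jn a b))))) = sm (sm (jn a b))). rewrite E. reflexivity.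
  - assert (E: sm (jn b (sm (sm (jn a b)))) = sm (jn a b)).
    { rewrite <- (test2 Hb) at 1. rewrite sim_jn, (j_absorb2 Hpo Hlub). reflexivity. }
    change (sm (sm (jn b (sm (sm (jn a b))))) = sm (sm (jn a b))). rewrite E. reflexivity.
  - intros [u Hu]; unfold TK_le, prec, bigvee; simpl. intros h1 h2.
    assert (E: sm (jn (sm (sm (jn a b))) u) = sm u).
    { rewrite <- (test2 Hu) at 1. rewrite sim_jn, (j_distr Hpo Hlub), <- sim_jn.
      unfold joinb at 2 3. rewrite h1, h2, (jid Hpo Hlub). reflexivity. }
    change (sm (sm (jn (sm (sm (jn a b))) u)) = u). rewrite E. apply test2. exact Hu.
Qed.

Lemma nu_sas k (Hk : tests k) : nu k = sasaki (@TK_le K) (@TK_compl K) sup (exist _ k Hk).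
Proof.
  apply functional_extensionality; intro v; apply TK_eq. unfold sasaki.
  rewrite (meet_dm HO), !TK_join. simpl. unfold bullet.
  rewrite !sim3.
  unfold joinb. rewrite <- (ida_sim_dyn K k (proj1_sig v)), (test2 Hk). reflexivity.
Qed.
End IDAth.

Section Part2.
Variable K : IDA.
Variable sup : (TK K -> Prop) -> TK K.
Hypothesis HO : is_cOML (@TK_le K) (@TK_compl K) sup.

Lemma nu_adj x : T K x -> is_adjoint (@TK_le K) (@TK_compl K) (nu x) (nu (ida_star K x)).
Proof.
  intros Hx; induction Hx.
  - destruct H as [l ->]. rewrite ida_star_sim, (nu_sas HO (sim_tests l)). apply (sas_selfadj HO).
  - rewrite e_star, nu_e. apply adj_id.
  - rewrite ida_star_mul, <- !nu_mul. apply adj_comp; auto.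
  - rewrite ida_starK. apply (adj_sym HO). exact IHHx.
Qed.
Lemma nu_star x : T K x -> nu (ida_star K x) = adj (@TK_le K) (@TK_compl K) (nu x).
Proof. intros Hx; symmetry; apply (adj_unique HO); apply nu_adj; auto. Qed.
End Part2.

Theorem proposition4p9 :
  (* (1) *)
  (forall K : IDA,
     (forall k : K, tests k -> T K k) /\
     T K (ida_e K) /\
     (forall x y : K, T K x -> T K y -> T K (ida_mul K x y)) /\
     (forall x : K, T K x -> T K (ida_star K x))) /\
  (* (2) *)
  (forall (K : IDA) (sup : (TK K -> Prop) -> TK K),
     is_cOML (@TK_le K) (@TK_compl K) sup ->
     (forall s t : K, T K s -> T K t -> (s = t <-> equivK s t)) ->
     IM_iso (ida_mul K) (ida_star K) (ida_e K) (T K)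
            (@comp (TK K)) (adj (@TK_le K) (@TK_compl K)) (fun x : TK K => x)
            (T_Lin (@TK_le K) (@TK_compl K) sup) (@nu K) /\
     (forall k l : K, tests k -> tests l -> prec k l ->
        Lin_le (nu k) (nu l)) /\
     (forall k : K, tests k -> Lin_tests (@TK_le K) (@TK_compl K) sup (nu k)) /\
     (forall k l : K, tests k -> tests l -> nu k = nu l -> k = l) /\
     (forall p, Lin_tests (@TK_le K) (@TK_compl K) sup p ->
        exists k : K, tests k /\ nu k = p)) /\
  (* (3) *)
  (forall (M : Type) (le : M -> M -> Prop) (compl : M -> M) (sup : (M -> Prop) -> M),
     is_cOML le compl sup ->
     IM_iso (@comp M) (adj le compl) (fun x : M => x) (T_Lin le compl sup)
            (@P_mul M) (P_star le compl) (@P_unit M)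
            (T_P le compl sup (T_Lin le compl sup))
            (fun f : M -> M => fun g : M -> M => g = f)) /\
  (* (4) *)
  (forall (K1 K2 : IDA) (f : K1 -> K2),
     is_IDA_mor f ->
     (forall x : K1, T K1 x -> T K2 (f x)) /\
     IM_hom (ida_mul K1) (ida_star K1) (ida_e K1) (T K1)
            (ida_mul K2) (ida_star K2) (ida_e K2) (T K2) f).
Proof.
  split; [|split; [|split]].
  -
    intros K; repeat split.
    + intros k Hk; apply gen_base; exact Hk.
    + apply gen_unit.
    + intros x y; apply gen_mul.
    + intros x; apply gen_star.
  -
    intros K sup HO Heq.
    pose proof (proj1 HO) as Po. pose proof (proj1 (proj2 HO)) as Lb.
    assert (inj : forall s t, T K s -> T K t -> nu s = nu t -> s = t).
    { intros s t Hs Ht h. apply (Heq s t Hs Ht). intros w Hw.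
      pose proof (f_equal (fun g => proj1_sig (g (exist _ w Hw))) h) as h2. exact h2. }
    split; [|split; [|split; [|split]]].
    + split; [split; [|split; [|split]]|split].
      * intros x Hx; induction Hx.
        -- apply gen_base. exists (exist _ x H). apply (nu_sas HO).
        -- rewrite nu_e. apply gen_unit.
        -- rewrite <- nu_mul. apply gen_mul; auto.
        -- rewrite (nu_star HO Hx). apply gen_star; auto.
      * intros x y _ _. symmetry; apply nu_mul.
      * apply nu_e.
      * intros x Hx. apply (nu_star HO Hx).
      * exact inj.
      * intros y Hy; induction Hy.
        -- destruct H as [m ->]. exists (proj1_sig m). split.
           ++ apply gen_base. apply (proj2_sig m).
           ++ destruct m as [m Hm]. apply (nu_sas HO).
        -- exists (ida_e K); split; [apply gen_unit|apply nu_e].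
        -- destruct IHHy1 as [a [Ha <-]], IHHy2 as [b [Hb <-]].
           exists (ida_mul K a b); split; [apply gen_mul; auto|symmetry; apply nu_mul].
        -- destruct IHHy as [a [Ha <-]].
           exists (ida_star K a); split; [apply gen_star; auto|apply (nu_star HO Ha)].
    + intros k l Hk Hl hkl. unfold Lin_le.
      rewrite (nu_sas HO Hk), (nu_sas HO Hl).
      apply functional_extensionality; intro v; unfold comp. symmetry.
      apply (sas_fix HO). eapply (le_trans Po Lb). apply (sas_le HO). exact hkl.
    + intros k Hk. exists (exist _ k Hk). apply (nu_sas HO).
    + intros k l Hk Hl h. apply inj; auto; apply gen_base; auto.
    + intros p [m ->]. exists (proj1_sig m). split. apply (proj2_sig m).
      destruct m as [m Hm]. apply (nu_sas HO).
  -
    intros M le compl sup HO.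
    pose proof (proj1 HO) as Po. pose proof (proj1 (proj2 HO)) as Lb.
    pose proof (proj1 (proj2 (proj2 HO))) as cc.
    split; [split; [|split; [|split]]|split].
    + intros x Hx; induction Hx.
      * destruct H as [m ->]. apply gen_base.
        exists (fun a => a = sasaki le compl sup (compl m)). split.
        -- intros a ->. apply gen_base. exists (compl m). reflexivity.
        -- unfold P_sim.
           assert (E : sup (fun z => exists a, a = sasaki le compl sup (compl m) /\ z = a (top sup)) = compl m).
           { transitivity (sup (fun z => z = sasaki le compl sup (compl m) (top sup))).
             - f_equal. apply pred_ext; intro z; split.
               + intros [a [-> ->]]; reflexivity.
               + intros ->; eauto.
             - rewrite (sup_single Po Lb). unfold sasaki. rewrite cc, (j_top Po Lb), (m_top Po Lb).
               reflexivity. }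
           rewrite E, cc. reflexivity.
      * apply gen_unit.
      * replace (fun g => g = comp x y) with (P_mul (fun g => g = x) (fun g => g = y)).
        apply gen_mul; auto.
        apply pred_ext; intro h; unfold P_mul; split.
        -- intros [a [b [-> [-> ->]]]]; reflexivity.
        -- intros ->; eauto 6.
      * replace (fun g => g = adj le compl x) with (P_star le compl (fun g => g = x)).
        apply gen_star; auto.
        apply pred_ext; intro h; unfold P_star, image; split.
        -- intros [a [-> ->]]; reflexivity.
        -- intros ->; eauto.
    + intros x y _ _. apply pred_ext; intro h; unfold P_mul; split.
      -- intros ->; eauto 6.
      -- intros [a [b [-> [-> ->]]]]; reflexivity.
    + reflexivity.
    + intros x _. apply pred_ext; intro h; unfold P_star, image; split.
      -- intros ->; eauto.
      -- intros [a [-> ->]]; reflexivity.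
    + intros x y _ _ h. pose proof (f_equal (fun P => P x) h) as h2. simpl in h2.
      rewrite <- h2. reflexivity.
    + intros Y HY; induction HY.
      * destruct H as [A [_ ->]]. eexists; split; [|reflexivity].
        apply gen_base. eexists; reflexivity.
      * exists (fun x : M => x). split; [apply gen_unit|reflexivity].
      * destruct IHHY1 as [a [Ha <-]], IHHY2 as [b [Hb <-]].
        exists (comp a b); split; [apply gen_mul; auto|].
        apply pred_ext; intro h; unfold P_mul; split.
        -- intros ->; eauto 6.
        -- intros [a' [b' [-> [-> ->]]]]; reflexivity.
      * destruct IHHY as [a [Ha <-]].
        exists (adj le compl a); split; [apply gen_star; auto|].
        apply pred_ext; intro h; unfold P_star, image; split.
        -- intros ->; eauto.
        -- intros [a' [-> ->]]; reflexivity.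
  -
    intros K1 K2 f [fj [fm [fs [fe fsim]]]].
    assert (HT : forall x, T K1 x -> T K2 (f x)).
    { intros x Hx; induction Hx.
      - destruct H as [l ->]. apply gen_base. rewrite fsim. apply sim_tests.
      - rewrite fe. apply gen_unit.
      - rewrite fm. apply gen_mul; auto.
      - rewrite fs. apply gen_star; auto. }
    split; [exact HT|]. split; [exact HT|]. split; [intros; apply fm|].
    split; [exact fe|]. intros; apply fs.
Qed.
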